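(* Let $\Theta$ be a finite set, $b$ a belief function on $\Theta$ with mass function $m_b$, and $\emptyset \subsetneq A \subseteq \Theta$. The set of $L_1$ conditional belief functions of $b$ with respect to $A$ in the mass space, i.e. the set of belief functions $a$ with $\vec{m}_a \in \mathcal{M}_A$ minimizing $\|\vec{m}_b - \vec{m}_a\|_{L_1}$ over $\mathcal{M}_A$, is \[ \Big\{ a : 2^\Theta\to[0,1] \text{ belief function} : \mathcal{C}_a \subseteq A,\ m_a(B) \geq m_b(B)\ \forall\, \emptyset \subsetneq B \subseteq A \Big\}. \]
   Context: A mass function on a finite set $\Theta$ is $m:2^\Theta\to[0,1]$ with $m(\emptyset)=0$ and $\sum_{A\subseteq\Theta} m(A)=1$; the associated belief function is $b(A)=\sum_{B\subseteq A} m_b(B)$. Focal elements are subsets with nonzero mass; the core $\mathcal{C}_a$ of a belief function $a$ is the union of its focal elements. The mass vector of $b$ is $\vec{m}_b=[m_b(B)]_{\emptyset\subsetneq B\subseteq\Theta}\in\mathbb{R}^{2^{|\Theta|}-1}$. For $\emptyset\subsetneq A\subseteq\Theta$, $\mathcal{M}_A$ is the set of mass vectors of belief functions all of whose focal elements are subsets of $A$ (the convex hull of the mass vectors of the categorical belief functions $m(B)=1$, $\emptyset\subsetneq B\subseteq A$). The $L_1$ distance is $\|\vec{m}_b-\vec{m}_{b'}\|_{L_1}=\sum_{\emptyset\subsetneq B\subseteq\Theta}|m_b(B)-m_{b'}(B)|$. *)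

(* Defs.v *)
From mathcomp Require Import all_boot all_order all_algebra.
From mathcomp Require Import reals.
Set Implicit Arguments. Unset Strict Implicit. Unset Printing Implicit Defensive.
Import Order.TTheory GRing.Theory Num.Theory.
Local Open Scope ring_scope.

Section BF.
Variables (R : realType) (T : finType).

Definition is_mass (m : {set T} -> R) : Prop :=
  [/\ m set0 = 0, (forall B, 0 <= m B <= 1) & \sum_(B : {set T}) m B = 1].

Definition belief (m : {set T} -> R) (A : {set T}) : R :=
  \sum_(B : {set T} | B \subset A) m B.

Definition focal (m : {set T} -> R) (B : {set T}) : bool := m B != 0.
Definition core (m : {set T} -> R) : {set T} :=
  \bigcup_(B : {set T} | focal m B) B.

Definition in_MA (A : {set T}) (m : {set T} -> R) : Prop :=
  is_mass m /\ forall B, focal m B -> B \subset A.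

Definition L1dist (m m' : {set T} -> R) : R :=
  \sum_(B : {set T} | B != set0) `|m B - m' B|.

Definition L1_conditional (A : {set T}) (mb ma : {set T} -> R) : Prop :=
  in_MA A ma /\ forall m', in_MA A m' -> L1dist mb ma <= L1dist mb m'.

End BF.

(* Main.v *)
Require Import Defs.
From mathcomp Require Import all_boot all_order all_algebra.
From mathcomp Require Import reals.
From mathcomp Require Import ring lra.
Import Order.TTheory GRing.Theory Num.Theory.
Set Implicit Arguments. Unset Strict Implicit. Unset Printing Implicit Defensive.
Local Open Scope ring_scope.

Section Aux.
Variables (R : realType) (T : finType) (mb : {set T} -> R) (A : {set T}).

Definition Dd (ma : {set T} -> R) : R :=
  \sum_(B | (B != set0) && (B \subset A)) (`|mb B - ma B| - (ma B - mb B)).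
Definition Kk : R :=
  1 - \sum_(B | (B != set0) && (B \subset A)) mb B
    + \sum_(B | (B != set0) && ~~ (B \subset A)) `|mb B|.

Lemma nonfocal0 (ma : {set T} -> R) (B : {set T}) :
  (forall B : {set T}, focal ma B -> B \subset A) -> ~~ (B \subset A) -> ma B = 0.
Proof.
move=> foc nsub; have := foc B; rewrite /focal.
by case: eqP => // _ /(_ isT); rewrite (negbTE nsub).
Qed.

Lemma sum_in (ma : {set T} -> R) : in_MA A ma ->
  \sum_(B | (B != set0) && (B \subset A)) ma B = 1.
Proof.
case=> [[m0 _ m1] foc].
rewrite -m1 [RHS](bigID (fun B : {set T} => (B != set0) && (B \subset A))) /= [X in _ = _ + X]big1 ?addr0 //.
move=> B; rewrite negb_and negbK => /orP [/eqP -> // | nsub].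
exact: nonfocal0.
Qed.

Lemma L1split (ma : {set T} -> R) : in_MA A ma -> L1dist mb ma = Dd ma + Kk.
Proof.
move=> hm; have hs := sum_in hm.
rewrite /L1dist (bigID (fun B : {set T} => B \subset A)) /= /Dd /Kk sumrB sumrB hs.
rewrite [X in _ + X = _](eq_bigr (fun B => `|mb B|)); last first.
  by move=> B /andP [_ nsub]; rewrite (nonfocal0 hm.2 nsub) subr0.
lra.
Qed.

Lemma Dd_ge0 (ma : {set T} -> R) : 0 <= Dd ma.
Proof.
apply: sumr_ge0 => B _; rewrite subr_ge0 distrC; exact: ler_norm.
Qed.

Lemma Dd0 (ma : {set T} -> R) : Dd ma = 0 ->
  forall B : {set T}, B != set0 -> B \subset A -> mb B <= ma B.
Proof.
move=> /eqP; rewrite psumr_eq0; last first.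
  by move=> B _; rewrite subr_ge0 distrC; exact: ler_norm.
move=> /allP h B nz sub.
have := h B (mem_index_enum _); rewrite nz sub /= subr_eq0 => /eqP e.
by rewrite -subr_ge0 -e.
Qed.

Lemma Dd0' (ma : {set T} -> R) : (forall B : {set T}, B != set0 -> B \subset A -> mb B <= ma B) ->
  Dd ma = 0.
Proof.
move=> h; apply: big1 => B /andP [nz sub].
by rewrite distrC ger0_norm ?subrr // subr_ge0 h.
Qed.

End Aux.

Theorem theorem1 (R : realType) (T : finType) (mb : {set T} -> R) (A : {set T}) :
  is_mass mb -> A != set0 ->
  forall ma : {set T} -> R,
    L1_conditional A mb ma <->
    [/\ is_mass ma, core ma \subset A &
        forall B : {set T}, B != set0 -> B \subset A -> mb B <= ma B].
Proof.
move=> [mb0 mbb mb1] nzA ma; split.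
- case=> hma hmin.
  set S := \sum_(B : {set T} | B \subset A) mb B.
  pose ms := fun B : {set T} =>
    (if B \subset A then mb B else 0) + (if B == A then 1 - S else 0).
  have Sge0 : 0 <= S by apply: sumr_ge0 => B _; case/andP: (mbb B).
  have Sle1 : S <= 1.
    rewrite -mb1 [X in _ <= X](bigID (fun B : {set T} => B \subset A)) /= lerDl.
    by apply: sumr_ge0 => B _; case/andP: (mbb B).
  have mbAS : mb A <= S.
    rewrite /S (bigD1 A) //= lerDl.
    by apply: sumr_ge0 => B _; case/andP: (mbb B).
  have hms : in_MA A ms.
    split; last first.
      move=> B; rewrite /focal /ms; case: (boolP (B \subset A)) => // nsub.
      have -> : (B == A) = false.
        by apply/negbTE; apply: contraNneq nsub => ->.
      by rewrite addr0 eqxx.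
    split.
    + rewrite /ms; have -> : (set0 == A) = false by apply/negbTE; rewrite eq_sym.
      by rewrite sub0set mb0 addr0.
    + move=> B; rewrite /ms; case: eqP => [->|_]; first by rewrite subxx; case/andP: (mbb A) => ? ?; apply/andP; split; lra.
      by rewrite addr0; case: ifP => // _; rewrite lexx ler01.
    + rewrite /ms big_split /= -big_mkcond /= -/S.
      by rewrite -big_mkcond /= big_pred1_eq; ring.
  have Dms : Dd mb A ms = 0.
    apply: Dd0' => B _ sub; rewrite /ms sub lerDl.
    by case: ifP => // _; lra.
  have := hmin _ hms; rewrite (L1split mb hma) (L1split mb hms) Dms add0r => hle.
  have hD : Dd mb A ma <= 0 by lra.
  have D0 : Dd mb A ma = 0 by apply/eqP; rewrite eq_le hD Dd_ge0.
  split; [exact: hma.1 | | exact: Dd0].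
  by apply/bigcupsP => B; exact: hma.2.
- case=> hm hc hge.
  have hma : in_MA A ma.
    split => // B fB; apply: subset_trans hc.
    exact: (bigcup_sup B).
  split => // m' hm'.
  rewrite (L1split mb hma) (L1split mb hm') (Dd0' hge) add0r.
  have := Dd_ge0 mb A m'; lra.
Qed.
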